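(* Let $A=\{a_1,a_2,\ldots,a_k\}$ be a set of $k\ge1$ distinct positive integers, let $\alpha$ be a positive integer with $\alpha\le k$, let $\tau$ be a permutation of $\{1,2,\ldots,k\}$, and let $A_{\tau(j)}=\{a_{\tau(1)},\ldots,a_{\tau(j)}\}$ for $j=1,\ldots,k$, with $A_{\tau(0)}=\emptyset$. Then \[ (a)\quad f(A)= \sum_{j=1}^k \sum_{ d\mid a_{\tau(j)} } \mu(d)\, 2^{v(A_{\tau(j-1)},d)}, \] \[ (b) \quad f_{\alpha}(A) = \sum_{j=1}^k \sum_{ d\mid a_{\tau(j)} } \mu(d) \binom{v(A_{\tau(j-1)},d)}{\alpha -1}. \]
   Context: $\mu$ is the Möbius function. For a finite set $B$ of positive integers and a positive integer $d$, $v(B,d)$ is the number of multiples of $d$ in $B$ (so $v(\emptyset,d)=0$). $f(A)$ is the number of nonempty subsets $X\subseteq A$ with $\gcd(X)=1$, and $f_\alpha(A)$ is the number of subsets $X\subseteq A$ with $|X|=\alpha$ and $\gcd(X)=1$. Binomial coefficients satisfy $\binom{m}{0}=1$ and $\binom{m}{k}=0$ when $k>m$. *)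

(* Defs.v *)
From HB Require Import structures.
From mathcomp Require Import all_boot all_order all_algebra all_fingroup.
From mathcomp Require Import finmap.
Set Implicit Arguments. Unset Strict Implicit. Unset Printing Implicit Defensive.
Import GRing.Theory Num.Theory.
Local Open Scope fset_scope.

Definition moebius (n : nat) : int :=
  if n == 0%N then 0%R
  else if all (fun p => logn p n == 1%N) (primes n)
       then ((-1) ^+ size (primes n))%R
       else 0%R.

(* gcd of a finite set of naturals (gcd of the empty set is 0). *)
Definition gcdset (X : {fset nat}) : nat := \big[gcdn/0%N]_(x <- X) x.

Definition v (B : {fset nat}) (d : nat) : nat := #|` [fset x in B | d %| x]|.

Definition f (A : {fset nat}) : nat :=
  #|` [fset X in fpowerset A | (X != fset0) && (gcdset X == 1%N)]|.

Definition f_alpha (alpha : nat) (A : {fset nat}) : nat :=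
  #|` [fset X in fpowerset A | (#|` X| == alpha) && (gcdset X == 1%N)]|.

(* Main.v *)
Require Import Defs.
From HB Require Import structures.
From mathcomp Require Import all_boot all_order all_algebra all_fingroup.
From mathcomp Require Import finmap.
Import GRing.Theory Num.Theory.
Local Open Scope fset_scope.
Definition N (B : {fset nat}) (P : pred {fset nat}) : nat := (\sum_(X <- fpowerset B | P X) 1)%N.

Lemma N_int B (P : pred {fset nat}) : ((N B P)%:Z = \sum_(Y <- fpowerset B) ((P Y : nat))%:Z)%R.
Proof.
rewrite /N big_mkcond /=; elim: (fpowerset B : seq _) => [|y s IH].
  by rewrite !big_nil.
by rewrite !big_cons PoszD IH; case: (P y).
Qed.

Lemma gcdset_dvd d X : (d %| gcdset X)%N = all (dvdn d) X.
Proof.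
rewrite /gcdset; elim: (X : seq nat) => [|y s IH]; first by rewrite big_nil dvdn0.
by rewrite big_cons dvdn_gcd IH.
Qed.

Lemma gcdsetU1 x Y : x \notin Y -> gcdset (x |` Y) = gcdn x (gcdset Y).
Proof. by move=> xY; rewrite /gcdset big_fsetU1. Qed.

Lemma N_sub B (P Q : pred {fset nat}) : (forall Y, Y `<=` B -> P Y = Q Y) -> N B P = N B Q.
Proof.
move=> H; rewrite /N big_seq_cond [in RHS]big_seq_cond; apply: eq_bigl => Y.
rewrite fpowersetE; case: (boolP (Y `<=` B)) => h; last by rewrite !andFb.
by rewrite !andTb H.
Qed.

Lemma N_dvd B (Q : pred {fset nat}) d :
  N B (fun Y => Q Y && (d %| gcdset Y)%N) = N [fset z in B | d %| z]%N Q.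
Proof.
rewrite /N; apply: eq_fbigl_cond => X; rewrite !inE /= !fpowersetE gcdset_dvd.
case: (Q X); rewrite ?andbF ?andbT //.
apply/andP/fsubsetP.
  case=> /fsubsetP sX /allP aX z zX; rewrite !inE sX //= aX //.
move=> sX; split; first by apply/fsubsetP => z /sX; rewrite !inE => /andP[].
by apply/allP => z /sX; rewrite !inE => /andP[].
Qed.

Lemma N_true B : N B (fun _ => true) = (2 ^ #|`B|)%N.
Proof. by rewrite -card_fpowerset card_fset_sum1. Qed.

Lemma fset_ind' (P : {fset nat} -> Prop) : P fset0 ->
  (forall x B, x \notin B -> P B -> P (x |` B)) -> forall B, P B.
Proof.
move=> h0 hS B; move: {2}#|`B| (erefl #|`B|) => n; elim: n B => [|n IH] B cB.
  by rewrite (cardfs0_eq cB).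
case: (fset_0Vmem B) => [E|[x xB]]; first by rewrite E cardfs0 in cB.
rewrite -(fsetD1K xB); apply: hS; first by rewrite !inE eqxx.
by apply: IH; move: cB; rewrite (cardfsD1 x) xB => -[].
Qed.

Lemma N_step x B P : x \notin B -> N (x |` B) P = (N B P + N B (fun Y => P (x |` Y)))%N.
Proof.
move=> xB; rewrite /N (big_fsetIDcond _ (fun X : {fset nat} => x \notin X)) /=.
congr (_ + _)%N.
  apply: eq_fbigl_cond => X; rewrite !inE /= !fpowersetE.
  by rewrite -fsubsetD1 fsetU1K.
have -> : [fset X in fpowerset (x |` B) | ~~ (x \notin X)] =
          [fset x |` Y | Y in fpowerset B].
  apply/fsetP => X; rewrite !inE fpowersetE negbK; apply/andP/imfsetP.
    case=> sX xX; exists (X `\ x); first by rewrite /= fpowersetE; apply/fsubsetP => z; rewrite !inE => /andP[nz /(fsubsetP sX)]; rewrite !inE (negbTE nz).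
    by rewrite fsetD1K.
  case=> Y /=; rewrite fpowersetE => sY ->; split; last by rewrite fset1U1.
  by rewrite fsetUS.
rewrite big_mkcond /= big_imfset /=; last first.
  move=> Y1 Y2; rewrite !fpowersetE => s1 s2 e.
  rewrite -(fsetU1K (a := x) (B := Y1)); last by apply: contra xB => /(fsubsetP s1).
  by rewrite e fsetU1K //; apply: contra xB => /(fsubsetP s2).
by rewrite -big_mkcond.
Qed.

Lemma N_false B : N B (fun _ => false) = 0%N.
Proof. by rewrite /N big_mkcond big1. Qed.

Lemma N_binom B m : N B (fun Y => #|`Y| == m) = 'C(#|`B|, m).
Proof.
elim/fset_ind': B m => [|x B xB IH] m.
  rewrite /N fpowerset0 big_mkcond big_seq_fset1 cardfs0 bin0n.
  by case: m.
rewrite N_step // cardfsU1 xB add1n IH.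
case: m => [|m].
  rewrite (N_sub _ _ (fun _ => false)) ?N_false ?addn0 ?bin0 //.
  move=> Y sY; rewrite cardfsU1; suff -> : x \notin Y by [].
  by apply: contra xB => /(fsubsetP sY).
rewrite binS (N_sub _ _ (fun Y => #|`Y| == m)) ?IH //.
move=> Y sY; rewrite cardfsU1; suff -> : x \notin Y by [].
by apply: contra xB => /(fsubsetP sY).
Qed.

Section Mu.
Local Open Scope ring_scope.
Lemma mu_pmul p d : prime p -> (0 < d)%N ->
  moebius (p * d)%N = if (p %| d)%N then 0 else - moebius d.
Proof.
move=> pp d0; have p0 := prime_gt0 pp.
have pd0 : (0 < p * d)%N by rewrite muln_gt0 p0.
rewrite /moebius.
have -> : (p * d == 0)%N = false by rewrite eqn0Ngt pd0.
have -> : (d == 0)%N = false by rewrite eqn0Ngt d0.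
have lpd : logn p (p * d) = (logn p d).+1 by rewrite lognM // logn_prime // eqxx.
case: (boolP (p %| d)%N) => pd.
  rewrite ifN //; apply/negP => /allP/(_ p).
  rewrite mem_primes pp pd0 dvdn_mulr // => /(_ isT).
  rewrite lpd eqSS => /eqP l0.
  by move: (mem_primes p d); rewrite pp d0 pd -logn_gt0 l0.
have npd : p \notin primes d by rewrite mem_primes (negbTE pd) !andbF.
have H : perm_eq (primes (p * d)) (p :: primes d).
  apply: uniq_perm; rewrite ?primes_uniq //=; first by rewrite npd primes_uniq.
  by move=> q; rewrite primesM // primes_prime // inE.
rewrite (perm_all _ H) (perm_size H) /= lpd.
have -> : logn p d = 0%N by apply/eqP; rewrite eqn0Ngt logn_gt0.
rewrite eqxx /=.
have -> : all (fun q => logn q (p * d) == 1%N) (primes d) =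
          all (fun q => logn q d == 1%N) (primes d).
  apply: eq_in_all => q qd; rewrite lognM // logn_prime //.
  by have -> : (q == p) = false by apply/negP => /eqP e; rewrite -e qd in npd.
by case: ifP => _; rewrite ?oppr0 // exprS mulN1r.
Qed.

Lemma mu_sum n : (0 < n)%N -> \sum_(d <- divisors n) moebius d = (n == 1%N)%:Z.
Proof.
move=> n0; case: (ltngtP n 1) => [|n1|->]; last by rewrite big_seq1.
  by rewrite ltnS leqn0 eqn0Ngt n0.
have pp := pdiv_prime n1; set p := pdiv n in pp.
have p0 := prime_gt0 pp.
set m := (n %/ p)%N.
have nE : n = (p * m)%N by rewrite mulnC divnK // pdiv_dvd.
clearbody m p.
have m0 : (0 < m)%N by move: n0; rewrite nE muln_gt0 => /andP[].
rewrite (bigID (fun d => p %| d)%N) /=.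
have -> : \sum_(d <- divisors n | (p %| d)%N) moebius d =
          \sum_(d <- divisors m) moebius (p * d)%N.
  rewrite -big_filter -(big_map (muln p) xpredT).
  have H : perm_eq [seq x <- divisors n | (p %| x)%N] [seq (p * i)%N | i <- divisors m].
  apply: uniq_perm.
  - by rewrite filter_uniq // divisors_uniq.
  - rewrite map_inj_uniq ?divisors_uniq // => x y /eqP.
    by rewrite eqn_pmul2l // => /eqP.
  move=> d; rewrite mem_filter -dvdn_divisors //; apply/andP/mapP.
    case=> /dvdnP[e ->]; rewrite nE mulnC dvdn_pmul2l // => em.
    by exists e; [rewrite -dvdn_divisors | rewrite mulnC].
  case=> e; rewrite -dvdn_divisors // => em ->; split; first exact: dvdn_mulr.
  by rewrite nE dvdn_pmul2l.
  exact: perm_big H.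
have -> : \sum_(d <- divisors n | ~~ (p %| d)%N) moebius d =
          \sum_(d <- divisors m | ~~ (p %| d)%N) moebius d.
  rewrite -big_filter -[in RHS]big_filter.
  have H : perm_eq [seq x <- divisors n | ~~ (p %| x)%N] [seq x <- divisors m | ~~ (p %| x)%N].
    apply: uniq_perm; rewrite ?filter_uniq ?divisors_uniq //.
    move=> d; rewrite !mem_filter -!dvdn_divisors //; case: (boolP (p %| d)%N) => //= pd.
    by rewrite nE Gauss_dvdr // coprime_sym prime_coprime.
  exact: perm_big H.
rewrite (eq_big_seq (fun d => if (p %| d)%N then 0 else - moebius d)); last first.
  move=> d; rewrite -dvdn_divisors // => dm; apply: mu_pmul => //.
  exact: dvdn_gt0 dm.
rewrite (bigID (fun d => p %| d)%N) /= big1; last by move=> d ->.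
rewrite add0r (eq_bigr (fun d => - moebius d)); last by move=> d /negbTE ->.
by rewrite sumrN addNr.
Qed.

End Mu.

Section Mob.
Local Open Scope ring_scope.

Lemma gcd_one h x : (0 < x)%N -> (0 < h)%N -> (h %| x)%N ->
  (h == 1%N)%:Z = \sum_(d <- divisors x) moebius d * (d %| h)%N%:Z.
Proof.
move=> x0 h0 hx; rewrite -mu_sum //.
have -> : divisors h = [seq d <- divisors x | (d %| h)%N].
  apply: (irr_sorted_eq ltn_trans ltnn).
  - exact: sorted_divisors_ltn.
  - by apply: sorted_filter; [exact: ltn_trans | exact: sorted_divisors_ltn].
  move=> d; rewrite mem_filter -!dvdn_divisors //.
  by case: (boolP (d %| h)%N) => //= dh; rewrite (dvdn_trans dh hx).
rewrite big_filter big_mkcond /=; apply: eq_bigr => d _.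
by case: (d %| h)%N; rewrite ?mulr1 ?mulr0.
Qed.

Lemma N_mobius B (Q : pred {fset nat}) x : (0 < x)%N ->
  (N B (fun Y => Q Y && (gcdn x (gcdset Y) == 1%N)))%:Z =
  \sum_(d <- divisors x) moebius d * (N B (fun Y => Q Y && (d %| gcdset Y)%N))%:Z.
Proof.
move=> x0; rewrite N_int.
rewrite (eq_bigr (fun Y => \sum_(d <- divisors x) moebius d * ((Q Y && (d %| gcdset Y)%N) : nat)%:Z)); last first.
  move=> Y _; case: (Q Y) => /=; last by rewrite big1 // => d _; rewrite mulr0.
  rewrite (gcd_one (gcdn x (gcdset Y)) x x0); last by rewrite dvdn_gcdl.
    apply: eq_big_seq => d; rewrite -dvdn_divisors // => dx.
    by rewrite dvdn_gcd dx.
  by rewrite gcdn_gt0 x0.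
rewrite exchange_big /=; apply: eq_bigr => d _.
by rewrite -mulr_sumr N_int.
Qed.
End Mob.

Lemma N_card B (P : pred {fset nat}) : #|` [fset X in fpowerset B | P X]| = N B P.
Proof. by rewrite card_fset_sum1 /N -big_fset_condE. Qed.

Lemma fset1U_neq0 x (Y : {fset nat}) : (x |` Y != fset0) = true.
Proof. by apply/negP => /eqP e; have := fset1U1 x Y; rewrite e inE. Qed.

Lemma f_step x B : (0 < x)%N -> x \notin B ->
  ((f (x |` B))%:Z = (f B)%:Z + \sum_(d <- divisors x) moebius d * (2 ^ v B d)%N%:Z)%R.
Proof.
move=> x0 xB; rewrite /f !N_card N_step // PoszD; congr (_ + _)%R.
rewrite (N_sub _ _ (fun Y => true && (gcdn x (gcdset Y) == 1%N))).
  rewrite N_mobius //; apply: eq_bigr => d _.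
  by rewrite (N_dvd _ (fun _ => true)) N_true.
move=> Y sY; have xY : x \notin Y by apply: contra xB => /(fsubsetP sY).
by rewrite fset1U_neq0 gcdsetU1.
Qed.

Lemma fa_step b x B : (0 < x)%N -> x \notin B ->
  ((f_alpha b.+1 (x |` B))%:Z = (f_alpha b.+1 B)%:Z +
     \sum_(d <- divisors x) moebius d * ('C(v B d, b))%:Z)%R.
Proof.
move=> x0 xB; rewrite /f_alpha !N_card N_step // PoszD; congr (_ + _)%R.
rewrite (N_sub _ _ (fun Y => (#|`Y| == b) && (gcdn x (gcdset Y) == 1%N))).
  rewrite N_mobius //; apply: eq_bigr => d _.
  by rewrite (N_dvd _ (fun Y => #|`Y| == b)) N_binom.
move=> Y sY; have xY : x \notin Y by apply: contra xB => /(fsubsetP sY).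
by rewrite gcdsetU1 // cardfsU1 xY.
Qed.

Theorem theorem3p2 (k : nat) (a : 'I_k -> nat) (alpha : nat) (tau : 'S_k) :
  (1 <= k)%N ->
  injective a ->
  (forall i, 0 < a i)%N ->
  (1 <= alpha <= k)%N ->
  let A := [fset a i | i in 'I_k] in
  let Apre (j : 'I_k) := [fset a (tau i) | i in [pred i : 'I_k | (i < j)%N]] in
  ((f A)%:Z =
     \sum_(j < k) \sum_(d <- divisors (a (tau j)))
        moebius d * (2 ^ v (Apre j) d)%:Z)%R /\
  ((f_alpha alpha A)%:Z =
     \sum_(j < k) \sum_(d <- divisors (a (tau j)))
        moebius d * ('C(v (Apre j) d, alpha.-1))%:Z)%R.
Proof.
move=> k1 ainj apos /andP[al1 _] A Apre.
pose P (m : nat) := [fset a (tau i) | i in [pred i : 'I_k | (i < m)%N]].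
have P0 : P 0%N = fset0.
  by apply/fsetP => z; rewrite inE /P; apply/imfsetP => -[i] /=; rewrite unfold_in /= ltn0.
have PS : forall m (hm : (m < k)%N),
    P m.+1 = a (tau (Ordinal hm)) |` P m /\ a (tau (Ordinal hm)) \notin P m.
  move=> m hm; rewrite /P; split.
    apply/fsetP => z; rewrite !inE; apply/imfsetP/orP.
      case=> i /=; rewrite unfold_in /= ltnS leq_eqVlt => /orP[/eqP ei|im] ->.
        by left; rewrite (_ : i = Ordinal hm) //; apply: val_inj.
      by right; apply/imfsetP; exists i => //; rewrite unfold_in.
    case=> [/eqP ->|/imfsetP[i im ->]].
      by exists (Ordinal hm) => //; rewrite unfold_in /=.
    by exists i => //; move: im; rewrite !unfold_in /= => /ltnW.
  apply/imfsetP => -[i] /=; rewrite unfold_in /= => im /ainj /perm_inj ei.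
  by move: im; rewrite -ei /= ltnn.
have PA : P k = A.
  rewrite /P /A; apply/fsetP => z; apply/imfsetP/imfsetP.
    by case=> i _ ->; exists (tau i).
  case=> i _ ->; exists (tau^-1 i)%g; first by rewrite unfold_in /= ltn_ord.
  by rewrite permKV.
have sum0 : forall (F : 'I_k -> int), (\sum_(j < k | (j < 0)%N) F j = 0)%R.
  by move=> F; rewrite big_pred0.
have sumS : forall (F : 'I_k -> int) m (hm : (m < k)%N),
    (\sum_(j < k | (j < m.+1)%N) F j = \sum_(j < k | (j < m)%N) F j + F (Ordinal hm))%R.
  move=> F m hm; rewrite (bigD1 (Ordinal hm)) //= addrC; congr (_ + _)%R.
  apply: eq_bigl => j; rewrite ltnS leq_eqVlt -(inj_eq val_inj) /=.
  by case: ltngtP.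

have sumk : forall (F : 'I_k -> int), (\sum_(j < k | (j < k)%N) F j = \sum_(j < k) F j)%R.
  by move=> F; apply: eq_bigl => j; rewrite ltn_ord.
split.
  rewrite -PA -sumk.
  suff : forall m, (m <= k)%N -> ((f (P m))%:Z = \sum_(j < k | (j < m)%N)
     \sum_(d <- divisors (a (tau j))) moebius d * (2 ^ v (Apre j) d)%:Z)%R by apply.
  elim=> [|m IH] hm.
    by rewrite P0 sum0 /f N_card /N fpowerset0 big_mkcond big_seq_fset1.
  have [E nin] := PS m hm.
  by rewrite sumS E f_step // IH 1?ltnW.
case: alpha al1 => // b _ /=.
rewrite -PA -sumk.
suff : forall m, (m <= k)%N -> ((f_alpha b.+1 (P m))%:Z = \sum_(j < k | (j < m)%N)
   \sum_(d <- divisors (a (tau j))) moebius d * ('C(v (Apre j) d, b))%:Z)%R by apply.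
elim=> [|m IH] hm.
  by rewrite P0 sum0 /f_alpha N_card /N fpowerset0 big_mkcond big_seq_fset1 cardfs0.
have [E nin] := PS m hm.
by rewrite sumS E fa_step // IH 1?ltnW.
Qed.
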